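(* Let $\beta>0$, $\lambda_p,\lambda_k\in\mathbb R$, and let $s_1,\dots,s_n\in\{\pm1\}$ be a nonconstant sign pattern, $S_\pm=\{i:s_i=\pm1\}$, $n_\pm=|S_\pm|$. Let $K^*_{ij}=a_+$ for $i,j\in S_+$, $b_+$ for $i\in S_+,j\in S_-$, $b_-$ for $i\in S_-,j\in S_+$, $a_-$ for $i,j\in S_-$, where \[ a_+=\frac{e^{\beta\lambda_p}}{n_+e^{\beta\lambda_p}+n_-e^{-\beta\lambda_p}},\ b_+=\frac{e^{-\beta\lambda_p}}{n_+e^{\beta\lambda_p}+n_-e^{-\beta\lambda_p}},\ a_-=\frac{e^{\beta\lambda_p}}{n_-e^{\beta\lambda_p}+n_+e^{-\beta\lambda_p}},\ b_-=\frac{e^{-\beta\lambda_p}}{n_-e^{\beta\lambda_p}+n_+e^{-\beta\lambda_p}}, \] let $\gamma_+=\lambda_p(n_+a_+-n_-b_+)$, $\gamma_-=\lambda_p(n_-a_--n_+b_-)$, $\gamma_i=\gamma_\pm$ for $i\in S_\pm$, and define $L_k:\mathbb R^n\to\mathbb R^n$ by $(L_kz)_i=-\gamma_iz_i+\lambda_k\sum_{j=1}^nK^*_{ij}z_j$. Let $V_\pm=\{z: z_i=0\text{ for }i\in S_\mp,\ \sum_{i\in S_\pm}z_i=0\}$ and $V_{\mathrm{mean}}=\{z: z\text{ constant on }S_+\text{ and on }S_-\}$. Then: on $V_+$ the only eigenvalue of $L_k$ is $-\gamma_+$, with multiplicity $n_+-1$; on $V_-$ the only eigenvalue is $-\gamma_-$,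 with multiplicity $n_--1$; and on $V_{\mathrm{mean}}$ the eigenvalues of $L_k$ are exactly those of \[ B_k=\begin{pmatrix}\lambda_kn_+a_+-\gamma_+ & \lambda_kn_-b_+\\ \lambda_kn_+b_- & \lambda_kn_-a_--\gamma_-\end{pmatrix}. \]
   Context: $L_k$ is the modewise (transverse direction $e_k$, $k\ne p$) linearization of the symmetric self-attention dynamics at the sign-split pure-mode equilibrium $x_i^*=s_ie_p$, where $\lambda_p,\lambda_k$ are eigenvalues of the symmetric interaction matrix. The subspaces $V_+,V_-,V_{\mathrm{mean}}$ are $L_k$-invariant and $\mathbb R^n=V_+\oplus V_-\oplus V_{\mathrm{mean}}$. *)

(* Defs.v *)
From HB Require Import structures.
From mathcomp Require Import all_boot all_order all_algebra.
From mathcomp Require Import reals.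
From mathcomp Require Import sequences exp.
Set Implicit Arguments. Unset Strict Implicit. Unset Printing Implicit Defensive.
Import Order.TTheory GRing.Theory Num.Theory.
Local Open Scope ring_scope.

Section Defs.
Variables (R : realType) (beta lp lk : R) (n : nat) (s : 'I_n -> bool).
(* sign pattern: s i = true  <->  s_i = +1 ;  s i = false <-> s_i = -1 *)

Definition npos : nat := #|[pred i | s i]|.
Definition nneg : nat := #|[pred i | ~~ s i]|.

Definition Dp : R := npos%:R * expR (beta * lp) + nneg%:R * expR (- (beta * lp)).
Definition Dm : R := nneg%:R * expR (beta * lp) + npos%:R * expR (- (beta * lp)).
Definition ap : R := expR (beta * lp) / Dp.
Definition bp : R := expR (- (beta * lp)) / Dp.
Definition am : R := expR (beta * lp) / Dm.
Definition bm : R := expR (- (beta * lp)) / Dm.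

Definition gp : R := lp * (npos%:R * ap - nneg%:R * bp).
Definition gm : R := lp * (nneg%:R * am - npos%:R * bm).
Definition gam (i : 'I_n) : R := if s i then gp else gm.

Definition Kstar : 'M[R]_n :=
  \matrix_(i, j) if s i then (if s j then ap else bp)
                 else (if s j then bm else am).

Definition Lk : 'M[R]_n :=
  \matrix_(i, j) ((if i == j then - gam i else 0) + lk * Kstar i j).

Definition inVplus (z : 'cV[R]_n) : Prop :=
  (forall i, ~~ s i -> z i 0 = 0) /\ \sum_(i | s i) z i 0 = 0.
Definition inVminus (z : 'cV[R]_n) : Prop :=
  (forall i, s i -> z i 0 = 0) /\ \sum_(i | ~~ s i) z i 0 = 0.
Definition inVmean (z : 'cV[R]_n) : Prop :=
  exists c d : R, forall i, z i 0 = if s i then c else d.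

Definition Bk : 'M[R]_2 :=
  \matrix_(i, j)
    if i == 0 then
      (if j == 0 then lk * npos%:R * ap - gp else lk * nneg%:R * bp)
    else
      (if j == 0 then lk * npos%:R * bm else lk * nneg%:R * am - gm).
End Defs.

Definition is_basis_of (R : realType) (n r : nat) (V : 'cV[R]_n -> Prop)
  (C : 'M[R]_(n, r)) : Prop :=
  \rank C = r /\ (forall z : 'cV[R]_n, V z <-> exists y : 'cV[R]_r, z = C *m y).

(* Main.v *)
Require Import Defs.
From HB Require Import structures.
From mathcomp Require Import all_boot all_order all_algebra.
From mathcomp Require Import reals.
From mathcomp Require Import sequences exp.
From mathcomp Require Import ring.
Import Order.TTheory GRing.Theory Num.Theory.
Local Open Scope ring_scope.
Set Implicit Arguments. Unset Strict Implicit. Unset Printing Implicit Defensive.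
Lemma char_poly_sim (F : fieldType) m (Y P B : 'M[F]_m) :
  Y *m P = 1%:M -> char_poly (Y *m B *m P) = char_poly B.
Proof.
move=> YP.
have YP' : map_mx polyC Y *m map_mx polyC P = 1%:M.
  by rewrite -map_mxM YP map_scalar_mx.
rewrite /char_poly /char_poly_mx.
have -> : 'X%:M - map_mx polyC (Y *m B *m P) =
  map_mx polyC Y *m ('X%:M - map_mx polyC B) *m map_mx polyC P.
  rewrite !map_mxM mulmxBr mulmxBl; congr (_ - _).
  by rewrite scalar_mxC -mulmxA YP' mulmx1.
rewrite !det_mulmx mulrC mulrA -det_mulmx.
by rewrite (mulmx1C YP') det1 mul1r.
Qed.

Lemma basis_transfer (F : fieldType) n m r (V : 'cV[F]_n -> Prop)
  (E : 'M[F]_(n, m)) (G : 'M[F]_(m, n)) (L : 'M[F]_n) (B : 'M[F]_m)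
  (C : 'M[F]_(n, r)) :
  G *m E = 1%:M -> (forall z, V z <-> exists y, z = E *m y) ->
  L *m E = E *m B ->
  \rank C = r -> (forall z, V z <-> exists y, z = C *m y) ->
  exists M, L *m C = C *m M /\ char_poly M = char_poly B.
Proof.
move=> GE HE LE rC HC.
have [P EP] : exists P, C = E *m P.
  have /submxP[D HD] : (C^T <= E^T)%MS.
    apply/row_subP => j; rewrite -tr_col.
    have [y ->] : exists y, col j C = E *m y.
      by apply/HE/HC; exists (delta_mx j 0); rewrite colE.
    by rewrite trmx_mul submxMl.
  by exists D^T; rewrite -[C]trmxK HD trmx_mul trmxK.
have [Y CY] : exists Y, E = C *m Y.
  have /submxP[D HD] : (E^T <= C^T)%MS.
    apply/row_subP => j; rewrite -tr_col.
    have [y ->] : exists y, col j E = C *m y.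
      by apply/HC/HE; exists (delta_mx j 0); rewrite colE.
    by rewrite trmx_mul submxMl.
  by exists D^T; rewrite -[E]trmxK HD trmx_mul trmxK.
have rm : r = m.
  apply/eqP; rewrite eqn_leq; apply/andP; split.
    by rewrite -{1}rC EP (leq_trans (mxrankM_maxr _ _)) ?rank_leq_row.
  have : (\rank (G *m E) <= r)%N.
    by rewrite (leq_trans (mxrankM_maxr _ _)) // CY -{2}rC mxrankM_maxl.
  by rewrite GE mxrank1.
subst r.
have PY : P *m Y = 1%:M.
  by rewrite -[P *m Y]mul1mx -GE -mulmxA (mulmxA E) -EP -CY GE.
exists (Y *m B *m P); split; last by rewrite char_poly_sim // (mulmx1C PY).
by rewrite EP mulmxA LE -!mulmxA (mulmxA P) PY mul1mx.
Qed.
Lemma dim_sub (F : fieldType) n (P : pred 'I_n) r (C : 'M[F]_(n,r)) :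
 (0 < #|P|)%N -> \rank C = r ->
 (forall z : 'cV[F]_n, ((forall i, ~~ P i -> z i 0 = 0) /\ \sum_(i | P i) z i 0 = 0)
    <-> exists y : 'cV_r, z = C *m y) -> r = #|P|.-1.
Proof.
move=> Ppos rC HC.
set N := #|P|.
pose Q : 'M[F]_(N, n) := \matrix_(k, i) ((i == enum_val k)%:R).
have QQ : Q *m Q^T = 1%:M.
  apply/matrixP => k k'; rewrite !mxE (bigD1 (enum_val k)) //= big1.
    rewrite !mxE eqxx mul1r addr0 (inj_eq enum_val_inj); by case: (k == k').
  by move=> i /negbTE ne; rewrite !mxE ne mul0r.
have rQ : \rank Q = N.
  apply/eqP; rewrite eqn_leq rank_leq_row /=.
  by rewrite -{1}(mxrank1 F N) -QQ mxrankM_maxl.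
pose one : 'M[F]_(N, 1) := const_mx 1.
have rone : \rank one = 1%N.
  apply/eqP; rewrite eqn_leq rank_leq_col /= lt0n mxrank_eq0.
  apply/eqP => /matrixP /(_ (Ordinal Ppos) 0); rewrite !mxE => /eqP.
  by rewrite oner_eq0.
pose K := kermx one.
have rK : \rank K = N.-1 by rewrite mxrank_ker rone subn1.
pose W := K *m Q.
have rW : \rank W = N.-1 by rewrite mxrankMfree ?rK // /row_free rQ.
suff : (C^T == W)%MS by move/eqmx_rank; rewrite mxrank_tr rC rW.
apply/andP; split.
- apply/row_subP => j; rewrite -tr_col.
  have : (forall i, ~~ P i -> (col j C) i 0 = 0) /\ \sum_(i | P i) (col j C) i 0 = 0.
    by apply/HC; exists (delta_mx j 0); rewrite colE.
  move: (col j C) => z [Hz0 Hzs].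
  have zQ : z^T *m Q^T = \row_k z (enum_val k) 0.
    apply/rowP => k; rewrite !mxE (bigD1 (enum_val k)) //= big1.
      by rewrite !mxE eqxx mulr1 addr0.
    by move=> i /negbTE ne; rewrite !mxE ne mulr0.
  have sumP : forall f : 'I_n -> F, \sum_(k < N) f (enum_val k) = \sum_(i | P i) f i.
    by move=> f; rewrite /N -big_enum_val; apply: eq_bigl.
  have -> : z^T = z^T *m Q^T *m Q.
    apply/rowP => i; rewrite zQ !mxE.
    transitivity (\sum_(k < N) (fun x => z x 0 * (i == x)%:R) (enum_val k)); last first.
      by apply: eq_bigr => k _; rewrite !mxE.
    rewrite (sumP (fun x => z x 0 * (i == x)%:R)).
    case Pi : (P i).
      by rewrite (bigD1 i) //= eqxx mulr1 big1 ?addr0 // => x /andP[_ /negbTE]; rewrite eq_sym => ->; rewrite mulr0.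
    rewrite Hz0 ?Pi // big1 // => x Px; have : x != i by apply: contraTneq Px => ->; rewrite Pi.
    by rewrite eq_sym => /negbTE ->; rewrite mulr0.
  apply: submxMr; apply/sub_kermxP; apply/rowP => k; rewrite zQ !mxE.
  transitivity (\sum_(k < N) (fun x => z x 0) (enum_val k)).
    by apply: eq_bigr => k' _; rewrite !mxE mulr1.
  by rewrite (sumP (fun x => z x 0)).
- apply/row_subP => k; rewrite row_mul.
  move: (row_sub k K) => /sub_kermxP Hy; move: (row k K) Hy => y Hy.
  have [x Hx] : exists x : 'cV_r, (y *m Q)^T = C *m x.
    apply: (proj1 (HC _)); split.
      move=> i nPi; rewrite !mxE big1 // => k' _; rewrite !mxE.
      have -> : (i == enum_val k') = false.
        by apply/negbTE; apply: contraNneq nPi => ->; apply: enum_valP.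
      by rewrite mulr0.
    under eq_bigr => i _ do rewrite !mxE.
    rewrite exchange_big /=.
    transitivity ((y *m one) 0 0); last by rewrite Hy mxE.
    rewrite mxE; apply: eq_bigr => k' _; rewrite !mxE mulr1.
    rewrite (bigD1 (enum_val k')); last by have := enum_valP k'.
    rewrite /= mxE eqxx mulr1 big1 ?addr0 // => i /andP[_ /negbTE ne].
    by rewrite mxE ne mulr0.
  by apply/submxP; exists x^T; rewrite -trmx_mul -Hx trmxK.
Qed.
Lemma sum_delta (R : pzRingType) n (f : 'I_n -> R) k :
  \sum_i (i == k)%:R * f i = f k.
Proof.
rewrite (bigD1 k) //= eqxx mul1r big1 ?addr0 // => i /negbTE ->.
by rewrite mul0r.
Qed.

Lemma Lk_row (R : realType) beta lp lk n (s : 'I_n -> bool) i (f : 'I_n -> R) :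
  \sum_l Lk beta lp lk s i l * f l =
  - gam beta lp s i * f i + lk * \sum_l Kstar beta lp s i l * f l.
Proof.
under eq_bigr => l _ do rewrite mxE mulrDl.
rewrite big_split /= mulr_sumr; congr (_ + _); last first.
  by apply: eq_bigr => l _; rewrite mulrA.
rewrite (bigD1 i) //= eqxx big1 ?addr0 // => l; rewrite eq_sym => /negbTE ->.
by rewrite mul0r.
Qed.

Lemma K_split (R : realType) beta lp n (s : 'I_n -> bool) i (f : 'I_n -> R) :
  \sum_l Kstar beta lp s i l * f l =
  (if s i then ap beta lp s else bm beta lp s) * \sum_(l | s l) f l +
  (if s i then bp beta lp s else am beta lp s) * \sum_(l | ~~ s l) f l.
Proof.
rewrite (bigID (fun l => s l)) /= !mulr_sumr; congr (_ + _).
  by apply: eq_bigr => l sl; rewrite mxE sl.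
by apply: eq_bigr => l /negbTE sl; rewrite mxE sl.
Qed.

Lemma scalar_cols (R : fieldType) n r (L : 'M[R]_n) (C : 'M[R]_(n, r)) a :
  (forall j i, \sum_l L i l * C l j = a * C i j) -> L *m C = C *m a%:M.
Proof.
move=> H; apply/matrixP => i j; rewrite mul_mx_scalar !mxE H.
by [].
Qed.

Lemma char_poly_scal (R : fieldType) r (a : R) :
  char_poly (a%:M : 'M_r) = ('X - a%:P) ^+ r.
Proof.
rewrite char_poly_trig ?scalar_mx_is_trig //.
under eq_bigr => i _ do rewrite mxE eqxx mulr1n.
by rewrite prodr_const card_ord.
Qed.

Lemma sum_const_pred (R: pzRingType) n (P : pred 'I_n) (c : R) : \sum_(l | P l) c = c *+ #|P|.
Proof. by rewrite sumr_const. Qed.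

Theorem propositionA3 (R : realType) (beta lp lk : R) (n : nat)
  (s : 'I_n -> bool) :
  0 < beta ->
  (exists i j, s i /\ ~~ s j) ->
  (forall (r : nat) (C : 'M[R]_(n, r)),
     is_basis_of (inVplus s) C ->
     exists M : 'M[R]_r, Lk beta lp lk s *m C = C *m M /\
       char_poly M = ('X + (gp beta lp s)%:P) ^+ (npos s).-1) /\
  (forall (r : nat) (C : 'M[R]_(n, r)),
     is_basis_of (inVminus s) C ->
     exists M : 'M[R]_r, Lk beta lp lk s *m C = C *m M /\
       char_poly M = ('X + (gm beta lp s)%:P) ^+ (nneg s).-1) /\
  (forall (r : nat) (C : 'M[R]_(n, r)),
     is_basis_of (inVmean s) C ->
     exists M : 'M[R]_r, Lk beta lp lk s *m C = C *m M /\
       char_poly M = char_poly (Bk beta lp lk s)).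
Proof.
move=> _ [i0 [j0 [Hi0 Hj0]]].
split; [|split].
- move=> r C [rC HC].
  have Hcol : forall j, inVplus s (col j C).
    by move=> j; apply/HC; exists (delta_mx j 0); rewrite colE.
  have rE : r = (npos s).-1.
    apply: (dim_sub (P := [pred i | s i])) rC HC.
    by apply/card_gt0P; exists i0.
  exists ((- gp beta lp s)%:M); split; last first.
    by rewrite char_poly_scal rE polyCN opprK.
  apply: scalar_cols => j i.
  have [H0 Hs] := Hcol j.
  transitivity (\sum_l Lk beta lp lk s i l * (col j C) l 0).
    by apply: eq_bigr => l _; rewrite [col _ _ _ _]mxE.
  rewrite Lk_row K_split Hs mulr0 add0r.
  rewrite big1 ?mulr0 ?addr0; last by move=> l; apply: H0.
  rewrite !mxE /gam; case: (boolP (s i)) => si //.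
  by move: (H0 i si); rewrite mxE => ->; rewrite !mulr0.
- move=> r C [rC HC].
  have Hcol : forall j, inVminus s (col j C).
    by move=> j; apply/HC; exists (delta_mx j 0); rewrite colE.
  have rE : r = (nneg s).-1.
    apply: (dim_sub (P := [pred i | ~~ s i])) rC _.
      by apply/card_gt0P; exists j0.
    move=> z; rewrite -HC /inVminus /=; split.
      by case=> H1 H2; split => // i si; apply: H1; rewrite negbK.
    by case=> H1 H2; split => // i /negPn; apply: H1.
  exists ((- gm beta lp s)%:M); split; last first.
    by rewrite char_poly_scal rE polyCN opprK.
  apply: scalar_cols => j i.
  have [H0 Hs] := Hcol j.
  transitivity (\sum_l Lk beta lp lk s i l * (col j C) l 0).
    by apply: eq_bigr => l _; rewrite [col _ _ _ _]mxE.
  rewrite Lk_row K_split Hs mulr0 addr0.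
  rewrite big1 ?mulr0 ?addr0; last by move=> l; apply: H0.
  rewrite !mxE /gam; case: (boolP (s i)) => si //.
  by move: (H0 i si); rewrite mxE => ->; rewrite !mulr0.
- move=> r C [rC HC].
  pose E : 'M[R]_(n, 2) := \matrix_(i, j) (if j == 0 then (s i)%:R else (~~ s i)%:R).
  pose G : 'M[R]_(2, n) := \matrix_(j, i) (if j == 0 then (i == i0)%:R else (i == j0)%:R).
  have ord2 : forall a : 'I_2, a = 0 \/ a = 1.
    by case=> [[|[|//]]] ?; [left|right]; apply/val_inj.
  have sum2 : forall f : 'I_2 -> R, \sum_j f j = f 0 + f 1.
    by move=> f; rewrite big_ord_recl big_ord1; congr (f _ + f _); exact: val_inj.
  apply: (basis_transfer (E := E) (G := G)) rC HC.
  + apply/matrixP => a b; rewrite !mxE.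
    under eq_bigr => i _ do rewrite !mxE.
    by case: (ord2 a) => ->; case: (ord2 b) => ->; rewrite /= sum_delta ?Hi0 ?Hj0 //= (negbTE Hj0) ?Hi0.
  + move=> z; split.
      move=> [c [d Hz]]; exists (\col_j (if j == 0 then c else d)).
      apply/matrixP => i k; rewrite (ord1 k) mxE sum2 !mxE /= Hz.
      by case: (s i); rewrite /= ?mul1r ?mul0r ?addr0 ?add0r.
    move=> [y ->]; exists (y 0 0), (y 1 0) => i.
    rewrite mxE sum2 !mxE /=.
    by case: (s i); rewrite /= ?mul1r ?mul0r ?addr0 ?add0r.
  + apply/matrixP => i b; rewrite !mxE sum2 Lk_row K_split !mxE.
    have c1 : \sum_(l | s l) E l b = (if b == 0 then (npos s)%:R else 0).
      under eq_bigr => l sl do rewrite mxE sl.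
      by case: (b == 0); rewrite sum_const_pred ?mul0rn //; congr (_ *+ _); apply: eq_card.
    have c2 : \sum_(l | ~~ s l) E l b = (if b == 0 then 0 else (nneg s)%:R).
      under eq_bigr => l /negbTE sl do rewrite mxE sl.
      by case: (b == 0); rewrite sum_const_pred ?mul0rn //; congr (_ *+ _); apply: eq_card.
    have -> : (1 == 0 :> 'I_2) = false by [].
    rewrite c1 c2 /gam eqxx; case: (b == 0); case: (s i) => /=; ring.
Qed.
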